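(* Let $C$ be a 2-copula and let $(U,V)$ be a random pair with joint distribution function $C$. Then: (i) $C$ is $I(-1,-1)$ if and only if $C(u,v)\,C(u',v')\ge C(u,v')\,C(u',v)$ for all $u,v,u',v'\in[0,1]$ with $u\le u'$ and $v\le v'$; (ii) $C$ is $I(1,-1)$ if and only if $[v-C(u,v)]\,[v'-C(u',v')]\le [v-C(u',v)]\,[v'-C(u,v')]$ for all $u,v,u',v'\in[0,1]$ with $u\le u'$ and $v\le v'$; (iii) $C$ is $I(-1,1)$ if and only if $[u-C(u,v)]\,[u'-C(u',v')]\le [u'-C(u',v)]\,[u-C(u,v')]$ for all $u,v,u',v'\in[0,1]$ with $u\le u'$ and $v\le v'$; (iv) $C$ is $I(1,1)$ if and only if $\widehat{C}(u,v)\,\widehat{C}(u',v')\ge \widehat{C}(u,v')\,\widehat{C}(u',v)$ for all $u,v,u',v'\in[0,1]$ with $u\le u'$ and $v\le v'$.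
   Context: An $n$-copula is the restriction to $[0,1]^n$ of an $n$-dimensional distribution function whose univariate marginals are uniform on $[0,1]$. For $\alpha=(\alpha_1,\dots,\alpha_n)\in\{-1,1\}^n$ and a random vector $\mathbf X=(X_1,\dots,X_n)$, write $\alpha\mathbf X=(\alpha_1X_1,\dots,\alpha_nX_n)$; inequalities between vectors are componentwise. $\mathbf X$ (or its distribution) is called increasing according to the direction $\alpha$, written $I(\alpha)$, if for every $\mathbf x\in\mathbb R^n$ the map $\mathbf x'\mapsto \mathbb P[\alpha\mathbf X>\mathbf x\mid \alpha\mathbf X>\mathbf x']$ is nondecreasing in $\mathbf x'$, i.e. $\mathbb P[\alpha\mathbf X>\mathbf x\mid \alpha\mathbf X>\mathbf x']\le \mathbb P[\alpha\mathbf X>\mathbf x\mid \alpha\mathbf X>\mathbf x'']$ whenever $\mathbf x'\le\mathbf x''$ and $\mathbb P[\alpha\mathbf X>\mathbf x'']>0$. A copula $C$ is called $I(\alpha)$ if a random vector with distribution function $C$ is $I(\alpha)$. The survival copula of the 2-copula $C$ is $\widehat C(u,v)=\mathbb P[U>1-u,\,V>1-v]=u+v-1+C(1-u,1-v)$. *)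

(* Defs.v *)
From HB Require Import structures.
From mathcomp Require Import all_boot all_order all_algebra.
From mathcomp Require Import all_classical all_reals all_analysis.
Set Implicit Arguments. Unset Strict Implicit. Unset Printing Implicit Defensive.
Import Order.TTheory GRing.Theory Num.Theory.
Local Open Scope classical_set_scope.
Local Open Scope ring_scope.

Definition upper_event (T : Type) (R : realType) (X1 X2 : T -> R)
  (a1 a2 : R) (x1 x2 : R) : set T :=
  [set t | x1 < a1 * X1 t /\ x2 < a2 * X2 t].

(* The random pair (X1, X2) is increasing according to the direction
   (a1, a2), I(a1,a2): for every x, the map x' |-> P[aX > x | aX > x'] is
   nondecreasing, i.e. for x' <= x'' with P[aX > x''] > 0,
   P[aX > x | aX > x'] <= P[aX > x | aX > x'']. *)
Definition increasing_dir (d : measure_display) (T : measurableType d)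
  (R : realType) (P : probability T R) (X1 X2 : T -> R) (a1 a2 : R) : Prop :=
  forall x1 x2 y1 y2 z1 z2 : R,
    y1 <= z1 -> y2 <= z2 ->
    0 < fine (P (upper_event X1 X2 a1 a2 z1 z2)) ->
    fine (P (upper_event X1 X2 a1 a2 x1 x2 `&` upper_event X1 X2 a1 a2 y1 y2))
      / fine (P (upper_event X1 X2 a1 a2 y1 y2))
    <=
    fine (P (upper_event X1 X2 a1 a2 x1 x2 `&` upper_event X1 X2 a1 a2 z1 z2))
      / fine (P (upper_event X1 X2 a1 a2 z1 z2)).

Definition survival_copula (R : realType) (C : R -> R -> R) (u v : R) : R :=
  u + v - 1 + C (1 - u) (1 - v).

(* Main.v *)
Require Import Defs.
From HB Require Import structures.
From mathcomp Require Import all_boot all_order all_algebra.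
From mathcomp Require Import all_classical all_reals all_analysis.
From mathcomp Require Import lra.
Import Order.TTheory GRing.Theory Num.Theory.
Local Open Scope classical_set_scope.
Local Open Scope ring_scope.

Section Abs.
Context {R : realFieldType}.

Lemma cross (A B x y : R) : 0 < A -> 0 < B -> (x / A <= y / B) = (x * B <= y * A).
Proof. by move=> A0 B0; rewrite ler_pdivrMr // mulrAC ler_pdivlMr. Qed.

Definition RRp (F : R -> R -> R) := forall y1 y2 z1 z2, y1 <= z1 -> y2 <= z2 ->
  F y1 z2 * F z1 y2 <= F y1 y2 * F z1 z2.

Definition ratio (F : R -> R -> R) := forall x1 x2 y1 y2 z1 z2 : R,
  y1 <= z1 -> y2 <= z2 -> 0 < F z1 z2 ->
  F (Num.max x1 y1) (Num.max x2 y2) / F y1 y2 <=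
  F (Num.max x1 z1) (Num.max x2 z2) / F z1 z2.

Definition good (F : R -> R -> R) := (forall x y, 0 <= F x y) /\
  (forall x1 x2 y1 y2, x1 <= y1 -> x2 <= y2 -> F y1 y2 <= F x1 x2).

Lemma good_swap {F} : good F -> good (fun x y => F y x).
Proof. by case=> F0 Fm; split=> // *; exact: Fm. Qed.

Lemma RRp_swap {F} : RRp F -> RRp (fun x y => F y x).
Proof.
move=> h y1 y2 z1 z2 l1 l2 /=; have := h y2 y1 z2 z1 l2 l1.
by rewrite mulrC [F y2 y1 * _]mulrC.
Qed.

Lemma step1 F (p q : R) {a b c : R} : good F -> RRp F -> a <= b -> 0 < F b c ->
  F (Num.max p a) (Num.max q c) / F a c <= F (Num.max p b) (Num.max q c) / F b c.
Proof.
move=> [F0 Fm] h ab Fb.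
have Fa : 0 < F a c by exact: (lt_le_trans Fb (Fm _ _ _ _ ab (lexx c))).
rewrite cross //.
have cc : c <= Num.max q c by rewrite le_max lexx orbT.
set c' := Num.max q c.
case: (lerP p a) => pa.
  rewrite [Num.max p b]max_r; last exact: le_trans pa ab.
  by have := h a c b c' ab cc; rewrite [F a c * _]mulrC.
case: (lerP b p) => bp.
  by apply: ler_wpM2l; [exact: F0 | exact: Fm].
apply: le_trans (h p c b c' (ltW bp) cc) _.
rewrite [F p c * _]mulrC; apply: ler_wpM2l; first exact: F0.
by apply: Fm => //; exact: ltW.
Qed.

Lemma RRp_ratio F : good F -> RRp F -> ratio F.
Proof.
move=> gF h x1 x2 y1 y2 z1 z2 l1 l2 Fz.
have Fw : 0 < F z1 y2 by exact: (lt_le_trans Fz (gF.2 _ _ _ _ (lexx z1) l2)).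
apply: le_trans (step1 F x1 x2 gF h l1 Fw) _.
exact: (step1 (fun x y => F y x) x2 x1 (good_swap gF) (RRp_swap h) l2 Fz).
Qed.

Lemma ratio_RRp F : good F -> ratio F -> RRp F.
Proof.
move=> [F0 Fm] h y1 y2 z1 z2 l1 l2.
have [Fz|Fz] := eqVneq (F y1 z2) 0.
  by rewrite Fz mul0r mulr_ge0.
have Fz' : 0 < F y1 z2 by rewrite lt_def Fz F0.
have Fy : 0 < F y1 y2 by exact: (lt_le_trans Fz' (Fm _ _ _ _ (lexx y1) l2)).
have := h z1 y2 y1 y2 y1 z2 (lexx y1) l2 Fz'.
rewrite [Num.max z1 y1]max_l // [Num.max y2 z2]max_r // maxxx cross //.
by rewrite mulrC [F z1 z2 * _]mulrC.
Qed.

Definition RRH (H : R -> R -> R) := forall u v u' v' : R, 0 <= u <= 1 -> 0 <= v <= 1 ->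
  0 <= u' <= 1 -> 0 <= v' <= 1 -> u <= u' -> v <= v' ->
  H u v' * H u' v <= H u v * H u' v'.

Lemma transfer (F H : R -> R -> R) (f1 f2 h1 h2 : R -> R) :
  (forall x1 x2, F x1 x2 = H (f1 x1) (f2 x2)) ->
  (forall x, 0 <= f1 x <= 1) -> (forall x, 0 <= f2 x <= 1) ->
  (forall x y, x <= y -> f1 y <= f1 x) -> (forall x y, x <= y -> f2 y <= f2 x) ->
  (forall u, 0 <= u <= 1 -> f1 (h1 u) = u) -> (forall u, 0 <= u <= 1 -> f2 (h2 u) = u) ->
  (forall x y, x <= y -> h1 y <= h1 x) -> (forall x y, x <= y -> h2 y <= h2 x) ->
  (RRp F <-> RRH H).
Proof.
move=> FH r1 r2 m1 m2 k1 k2 a1 a2; split.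
  move=> h u v u' v' hu hv hu' hv' uu vv.
  have := h (h1 u') (h2 v') (h1 u) (h2 v) (a1 _ _ uu) (a2 _ _ vv).
  rewrite !FH !k1 // !k2 //.
  by rewrite mulrC [H u' v' * _]mulrC.
move=> h y1 y2 z1 z2 l1 l2.
have := h (f1 z1) (f2 z2) (f1 y1) (f2 y2) (r1 _) (r2 _) (r1 _) (r2 _) (m1 _ _ l1) (m2 _ _ l2).
by rewrite !FH mulrC [H (f1 z1) (f2 z2) * _]mulrC.
Qed.

End Abs.

Section Prob.
Context {d : measure_display} {T : measurableType d} {R : realType}
  (P : probability T R).

Definition pr (A : set T) : R := fine (P A).

Lemma prE {A} : measurable A -> P A = (pr A)%:E.
Proof. by move=> mA; rewrite /pr fineK //; exact: fin_num_measure. Qed.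

Lemma pr_ge0 A : 0 <= pr A.
Proof. exact/fine_ge0/measure_ge0. Qed.

Lemma pr_le {A B} : measurable A -> measurable B -> A `<=` B -> pr A <= pr B.
Proof.
move=> mA mB AB; have H := le_measure P (mem_set mA) (mem_set mB) AB. 
by rewrite -lee_fin -(prE mA) -(prE mB).
Qed.

Lemma pr_le1 {A} : measurable A -> pr A <= 1.
Proof. by move=> mA; rewrite -lee_fin -(prE mA); exact: probability_le1. Qed.

Lemma prT : pr setT = 1.
Proof. by rewrite /pr probability_setT. Qed.

Lemma prU {A B} : measurable A -> measurable B -> A `&` B = set0 ->
  pr (A `|` B) = pr A + pr B.
Proof.
move=> mA mB AB; apply/EFin_inj.
by rewrite EFinD -(prE mA) -(prE mB) -(prE (measurableU _ _ mA mB)) measureU.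
Qed.

Lemma pr_split {A B B' : set T} : measurable A -> measurable B -> measurable B' ->
  (forall t, B t \/ B' t) -> (forall t, B t -> B' t -> False) ->
  pr A = pr (A `&` B) + pr (A `&` B').
Proof.
move=> mA mB mB' cov dis.
rewrite -prU; first congr pr.
- apply/seteqP; split=> t /=.
    by move=> At; case: (cov t) => ?; [left|right].
  by case=> -[].
- exact: measurableI.
- exact: measurableI.
apply/seteqP; split => t /=; last by [].
by move=> [[_ h1] [_ h2]]; exact: (dis t h1 h2).
Qed.

Lemma pr0 {A} : measurable A -> pr A <= 0 -> pr A = 0.
Proof. by move=> mA h; apply/eqP; rewrite eq_le h pr_ge0. Qed.

Variable X : T -> R.
Hypothesis mX : measurable_fun setT X.

Lemma mpre (Y : set R) : measurable Y -> measurable (X @^-1` Y).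
Proof. by move=> mY; rewrite -[X @^-1` Y]setTI; exact: mX. Qed.

Lemma m_le s : measurable [set t | X t <= s].
Proof.
have -> : [set t | X t <= s] = X @^-1` [set` `]-oo, s]].
  by apply/seteqP; split=> t /=; rewrite in_itv.
apply: mpre; exact: measurable_itv.
Qed.

Lemma m_lt s : measurable [set t | X t < s].
Proof.
have -> : [set t | X t < s] = X @^-1` [set` `]-oo, s[].
  by apply/seteqP; split=> t /=; rewrite in_itv.
apply: mpre; exact: measurable_itv.
Qed.

Lemma m_gt s : measurable [set t | s < X t].
Proof.
have -> : [set t | s < X t] = X @^-1` [set` `]s, +oo[].
  by apply/seteqP; split=> t /=; rewrite in_itv /= andbT.
apply: mpre; exact: measurable_itv.
Qed.

Lemma m_ge s : measurable [set t | s <= X t].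
Proof.
have -> : [set t | s <= X t] = X @^-1` [set` `[s, +oo[].
  by apply/seteqP; split=> t /=; rewrite in_itv /= andbT.
apply: mpre; exact: measurable_itv.
Qed.

Definition g (s : R) : R := if s < 0 then 0 else if 1 < s then 1 else s.

Lemma g01 s : 0 <= g s <= 1.
Proof. rewrite /g; case: (ltrP s 0) => h1; case: (ltrP 1 s) => h2; lra. Qed.

Lemma gid s : 0 <= s <= 1 -> g s = s.
Proof. rewrite /g; case: (ltrP s 0) => h1; case: (ltrP 1 s) => h2; lra. Qed.

Lemma g_mono x y : x <= y -> g x <= g y.
Proof. move=> xy; rewrite /g; case: (ltrP x 0) => h1; case: (ltrP 1 x) => h2;
  case: (ltrP y 0) => h3; case: (ltrP 1 y) => h4; lra. Qed.

Lemma gg s : g (g s) = g s.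
Proof. exact/gid/g01. Qed.

Lemma g_lip s e : 0 < e -> g s - g (s - e) <= e.
Proof.
move=> e0; rewrite /g; case: (ltrP s 0) => h1; case: (ltrP 1 s) => h2;
  case: (ltrP (s - e) 0) => h3; case: (ltrP 1 (s - e)) => h4; lra.
Qed.

Hypothesis unifX : forall u : R, 0 <= u <= 1 -> P [set t | X t <= u] = u%:E.

Lemma unifX' u : 0 <= u <= 1 -> pr [set t | X t <= u] = u.
Proof. by move=> h; rewrite /pr unifX. Qed.

Lemma marg s : pr [set t | X t <= s] = g s.
Proof.
rewrite /g; case: (ltrP s 0) => h1.
  apply: pr0; first exact: m_le.
  rewrite -(unifX' 0); last lra.
  by apply: pr_le; [exact: m_le|exact: m_le|] => t /=; lra.
case: (ltrP 1 s) => h2; last by apply: unifX'; lra.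
apply/eqP; rewrite eq_le pr_le1 ?m_le //=.
rewrite -{1}(unifX' 1); last lra.
apply: pr_le; [exact: m_le|exact: m_le|move=> t /=; lra].
all: exact: m_le.
Qed.

Lemma pr_gt s : pr [set t | s < X t] = 1 - g s.
Proof.
rewrite -prT -(marg s) (pr_split measurableT (m_le s) (m_gt s)) //; last 2 first.
- by move=> t; case: (lerP (X t) s) => h; [left|right].
- by move=> t /= h1 h2; lra.
rewrite !setTI; lra.
Qed.

Lemma split_le s {Q : set T} : measurable Q ->
  pr Q = pr ([set t | X t <= s] `&` Q) + pr ([set t | s < X t] `&` Q).
Proof.
move=> mQ; rewrite (pr_split _ (m_le s) (m_gt s)) //; last 2 first.
- by move=> t; case: (lerP (X t) s) => h; [left|right].
- by move=> t /= h1 h2; lra.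
by rewrite ![Q `&` _]setIC.
Qed.

Lemma clamp s {Q : set T} : measurable Q ->
  pr ([set t | X t <= s] `&` Q) = pr ([set t | X t <= g s] `&` Q).
Proof.
move=> mQ.
have sub0 : forall a, a <= 0 -> pr ([set t | X t <= a] `&` Q) = 0.
  move=> a a0; apply: pr0; first exact: measurableI (m_le a) mQ.
  rewrite -(unifX' 0); last lra.
  apply: pr_le; [exact: measurableI (m_le a) mQ|exact: m_le|] => t /= [h _]; lra.
have sub1 : forall a, 1 <= a -> pr ([set t | X t <= a] `&` Q) = pr Q.
  move=> a a1; rewrite (split_le a mQ).
  suff -> : pr ([set t | a < X t] `&` Q) = 0 by rewrite addr0.
  apply: pr0; first exact: measurableI (m_gt a) mQ.
  have h := pr_gt a; have ga : g a = 1 by rewrite /g; case: (ltrP a 0) => ?; case: (ltrP 1 a) => ?; lra.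
  rewrite ga subrr in h; rewrite -h.
  apply: pr_le; [exact: measurableI (m_gt a) mQ|exact: m_gt|] => t /= [? _]; lra.
rewrite /g; case: ifPn => h1.
  by rewrite !sub0 //; lra.
case: ifPn => h2 //.
by rewrite !sub1 //; lra.
Qed.

Lemma strict s {Q : set T} : measurable Q ->
  pr ([set t | X t < s] `&` Q) = pr ([set t | X t <= s] `&` Q).
Proof.
move=> mQ.
have mA := measurableI _ _ (m_le s) mQ.
rewrite (pr_split _ (m_lt s) (m_ge s) (A := [set t | X t <= s] `&` Q)) //; last 2 first.
- by move=> t; case: (ltrP (X t) s) => h; [left|right].
- by move=> t /= h1 h2; lra.
have -> : [set t | X t <= s] `&` Q `&` [set t | X t < s] = [set t | X t < s] `&` Q.
  apply/seteqP; split => t /=; first by case=> -[]. by case=> h hq; split => //; split => //; lra.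
suff -> : pr ([set t | X t <= s] `&` Q `&` [set t | s <= X t]) = 0 by rewrite addr0.
have mB := measurableI _ _ mA (m_ge s).
apply: pr0 => //.
apply/ler_addgt0Pr => e e0; rewrite add0r.
apply: (@le_trans _ _ (g s - g (s - e))); last exact: g_lip.
rewrite -!marg (split_le (s - e) (m_le s)).
have -> : [set t | X t <= s - e] `&` [set t | X t <= s] = [set t | X t <= s - e].
  apply/seteqP; split => t /=; first by case. by move=> h; split => //; lra.
rewrite addrC addKr.
apply: pr_le; [exact: mB|exact: measurableI (m_gt _) (m_le _)|].
by move=> t /= [[h1 _] h2]; split; lra.
Qed.

Lemma compl s {Q : set T} : measurable Q ->
  pr ([set t | s < X t] `&` Q) = pr Q - pr ([set t | X t <= s] `&` Q).
Proof. by move=> mQ; rewrite (split_le s mQ); lra. Qed.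

End Prob.

Section Main.
Context {d : measure_display} {T : measurableType d} {R : realType}
  (P : probability T R) (U V : T -> R) (C : R -> R -> R)
  (mU : measurable_fun setT U) (mV : measurable_fun setT V)
  (unifU : forall u : R, 0 <= u <= 1 -> P [set t | U t <= u] = u%:E)
  (unifV : forall v : R, 0 <= v <= 1 -> P [set t | V t <= v] = v%:E)
  (dfC : forall u v : R, 0 <= u <= 1 -> 0 <= v <= 1 ->
         P [set t | U t <= u /\ V t <= v] = (C u v)%:E).

Lemma setI_max a1 a2 x1 x2 y1 y2 :
  upper_event U V a1 a2 x1 x2 `&` upper_event U V a1 a2 y1 y2 =
  upper_event U V a1 a2 (Num.max x1 y1) (Num.max x2 y2).
Proof.
rewrite /upper_event; apply/seteqP; split => t /=.
  by move=> [[h1 h2] [h3 h4]]; rewrite !gt_max h1 h2 h3 h4.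
by rewrite !gt_max => -[/andP[? ?] /andP[? ?]].
Qed.

Definition Fa a1 a2 x1 x2 := pr P (upper_event U V a1 a2 x1 x2).

Lemma dir_ratio a1 a2 : increasing_dir P U V a1 a2 <-> ratio (Fa a1 a2).
Proof.
rewrite /increasing_dir /ratio /Fa /pr; split => h x1 x2 y1 y2 z1 z2 l1 l2 hz;
  by have := h x1 x2 y1 y2 z1 z2 l1 l2 hz; rewrite !setI_max.
Qed.

Lemma m_upper a1 a2 x1 x2 : measurable (upper_event U V a1 a2 x1 x2).
Proof.
change (measurable ([set t | x1 < a1 * U t] `&` [set t | x2 < a2 * V t])).
apply: measurableI; apply: m_gt.
  exact: (measurable_realfun.measurable_funM (f := cst a1) (g := U) (measurable_cst _) mU).
exact: (measurable_realfun.measurable_funM (f := cst a2) (g := V) (measurable_cst _) mV).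
Qed.

Lemma good_Fa a1 a2 : good (Fa a1 a2).
Proof.
split; first by move=> *; exact: pr_ge0.
move=> x1 x2 y1 y2 l1 l2; apply: pr_le; try exact: m_upper.
move=> t [h1 h2]; split; [exact: le_lt_trans l1 h1 | exact: le_lt_trans l2 h2].
Qed.

Lemma dir_RRH a1 a2 (H : R -> R -> R) (f1 f2 h1 h2 : R -> R) :
  (forall x1 x2, Fa a1 a2 x1 x2 = H (f1 x1) (f2 x2)) ->
  (forall x, 0 <= f1 x <= 1) -> (forall x, 0 <= f2 x <= 1) ->
  (forall x y, x <= y -> f1 y <= f1 x) -> (forall x y, x <= y -> f2 y <= f2 x) ->
  (forall u, 0 <= u <= 1 -> f1 (h1 u) = u) -> (forall u, 0 <= u <= 1 -> f2 (h2 u) = u) ->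
  (forall x y, x <= y -> h1 y <= h1 x) -> (forall x y, x <= y -> h2 y <= h2 x) ->
  increasing_dir P U V a1 a2 <-> RRH H.
Proof.
move=> FH r1 r2 m1 m2 k1 k2 b1 b2.
have tr := transfer _ _ _ _ _ _ FH r1 r2 m1 m2 k1 k2 b1 b2.
rewrite dir_ratio; split => h.
  exact/tr/ratio_RRp/h/good_Fa.
exact/RRp_ratio/tr/h/good_Fa.
Qed.

Lemma J s t : pr P ([set w | U w <= s] `&` [set w | V w <= t]) = C (g s) (g t).
Proof.
rewrite (clamp P U mU unifU s (m_le V mV t)) setIC.
rewrite (clamp P V mV unifV t (m_le U mU (g s))) setIC /pr.
rewrite (_ : _ `&` _ = [set w | U w <= g s /\ V w <= g t]) //.
by rewrite dfC ?g01.
Qed.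

Lemma J_lt_le s t : pr P ([set w | U w < s] `&` [set w | V w <= t]) = C (g s) (g t).
Proof. by rewrite (strict P U mU unifU s (m_le V mV t)) J. Qed.

Lemma J_le_lt s t : pr P ([set w | U w <= s] `&` [set w | V w < t]) = C (g s) (g t).
Proof.
by rewrite setIC (strict P V mV unifV t (m_le U mU s)) setIC J.
Qed.

Lemma J_lt_lt s t : pr P ([set w | U w < s] `&` [set w | V w < t]) = C (g s) (g t).
Proof. by rewrite (strict P U mU unifU s (m_lt V mV t)) J_le_lt. Qed.

Lemma marg_lt (X : T -> R) (mX : measurable_fun setT X)
  (unifX : forall u : R, 0 <= u <= 1 -> P [set t | X t <= u] = u%:E) s :
  pr P [set w | X w < s] = g s.
Proof.
rewrite -(setIT [set w | X w < s]) (strict P X mX unifX s measurableT).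
by rewrite setIT marg.
Qed.

Lemma F1 x1 x2 : Fa (-1) (-1) x1 x2 = C (g (- x1)) (g (- x2)).
Proof.
rewrite /Fa (_ : upper_event _ _ _ _ _ _ = [set w | U w < - x1] `&` [set w | V w < - x2]).
  exact: J_lt_lt.
rewrite /upper_event; apply/seteqP; split => t /= [h1 h2]; split; lra.
Qed.

Lemma F2 x1 x2 : Fa 1 (-1) x1 x2 = g (- x2) - C (g x1) (g (- x2)).
Proof.
rewrite /Fa (_ : upper_event _ _ _ _ _ _ = [set w | x1 < U w] `&` [set w | V w < - x2]).
  by rewrite (compl P U mU x1 (m_lt V mV _)) (marg_lt V mV unifV) J_le_lt.
rewrite /upper_event; apply/seteqP; split => t /= [h1 h2]; split; lra.
Qed.

Lemma F3 x1 x2 : Fa (-1) 1 x1 x2 = g (- x1) - C (g (- x1)) (g x2).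
Proof.
rewrite /Fa (_ : upper_event _ _ _ _ _ _ = [set w | x2 < V w] `&` [set w | U w < - x1]).
  by rewrite (compl P V mV x2 (m_lt U mU _)) (marg_lt U mU unifU) setIC J_lt_le.
rewrite /upper_event; apply/seteqP; split => t /= [h1 h2]; split; lra.
Qed.

Lemma F4 x1 x2 : Fa 1 1 x1 x2 = (1 - g x2) - (g x1 - C (g x1) (g x2)).
Proof.
rewrite /Fa (_ : upper_event _ _ _ _ _ _ = [set w | x1 < U w] `&` [set w | x2 < V w]).
  rewrite (compl P U mU x1 (m_gt V mV _)) (pr_gt P V mV unifV) setIC.
  by rewrite (compl P V mV x2 (m_le U mU _)) (marg P U mU unifU) setIC J.
rewrite /upper_event; apply/seteqP; split => t /= [h1 h2]; split; lra.
Qed.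

Let e1 (x : R) : 1 - (1 - x) = x. Proof. lra. Qed.
Let r1 (x : R) : 0 <= x <= 1 -> 0 <= 1 - x <= 1.
Proof. by move=> /andP[? ?]; apply/andP; split; lra. Qed.

Lemma case1 : increasing_dir P U V (-1) (-1) <-> RRH C.
Proof.
apply: (dir_RRH (-1) (-1) C (fun x => g (- x)) (fun x => g (- x)) (fun u => - u) (fun u => - u)).
- by move=> x1 x2; rewrite F1.
- by move=> x; exact: g01.
- by move=> x; exact: g01.
- by move=> x y xy; apply: g_mono; lra.
- by move=> x y xy; apply: g_mono; lra.
- by move=> u hu /=; rewrite opprK gid.
- by move=> u hu /=; rewrite opprK gid.
- by move=> x y xy; lra.
- by move=> x y xy; lra.
Qed.

Let H2 := fun a v => v - C (1 - a) v.
Let H3 := fun u b => u - C u (1 - b).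

Lemma case2' : increasing_dir P U V 1 (-1) <-> RRH H2.
Proof.
apply: (dir_RRH 1 (-1) H2 (fun x => 1 - g x) (fun x => g (- x)) (fun u => 1 - u) (fun u => - u)).
- by move=> x1 x2; rewrite F2 /H2 e1.
- by move=> x; apply: r1; exact: g01.
- by move=> x; exact: g01.
- by move=> x y xy; have := g_mono x y xy; lra.
- by move=> x y xy; apply: g_mono; lra.
- by move=> u hu /=; rewrite gid ?e1 ?r1.
- by move=> u hu /=; rewrite opprK gid.
- by move=> x y xy; lra.
- by move=> x y xy; lra.
Qed.

Lemma case3' : increasing_dir P U V (-1) 1 <-> RRH H3.
Proof.
apply: (dir_RRH (-1) 1 H3 (fun x => g (- x)) (fun x => 1 - g x) (fun u => - u) (fun u => 1 - u)).
- by move=> x1 x2; rewrite F3 /H3 e1.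
- by move=> x; exact: g01.
- by move=> x; apply: r1; exact: g01.
- by move=> x y xy; apply: g_mono; lra.
- by move=> x y xy; have := g_mono x y xy; lra.
- by move=> u hu /=; rewrite opprK gid.
- by move=> u hu /=; rewrite gid ?e1 ?r1.
- by move=> x y xy; lra.
- by move=> x y xy; lra.
Qed.

Lemma case4 : increasing_dir P U V 1 1 <-> RRH (survival_copula C).
Proof.
apply: (dir_RRH 1 1 _ (fun x => 1 - g x) (fun x => 1 - g x) (fun u => 1 - u) (fun u => 1 - u)).
- by move=> x1 x2; rewrite F4 /survival_copula !e1; lra.
- by move=> x; apply: r1; exact: g01.
- by move=> x; apply: r1; exact: g01.
- by move=> x y xy; have := g_mono x y xy; lra.
- by move=> x y xy; have := g_mono x y xy; lra.
- by move=> u hu /=; rewrite gid ?e1 ?r1.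
- by move=> u hu /=; rewrite gid ?e1 ?r1.
- by move=> x y xy; lra.
- by move=> x y xy; lra.
Qed.

Lemma case2 : increasing_dir P U V 1 (-1) <->
     (forall u v u' v' : R, 0 <= u <= 1 -> 0 <= v <= 1 ->
        0 <= u' <= 1 -> 0 <= v' <= 1 -> u <= u' -> v <= v' ->
        (v - C u v) * (v' - C u' v') <= (v - C u' v) * (v' - C u v')).
Proof.
rewrite case2'; split => h u v u' v' hu hv hu' hv' uu vv.
  have uu' : 1 - u' <= 1 - u by lra.
  have := h (1 - u') v (1 - u) v' (r1 _ hu') hv (r1 _ hu) hv' uu' vv.
  by rewrite /H2 !e1 mulrC.
have uu' : 1 - u' <= 1 - u by lra.
have := h (1 - u') v (1 - u) v' (r1 _ hu') hv (r1 _ hu) hv' uu' vv.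
by rewrite /H2 [X in X <= _]mulrC.
Qed.

Lemma case3 : increasing_dir P U V (-1) 1 <->
     (forall u v u' v' : R, 0 <= u <= 1 -> 0 <= v <= 1 ->
        0 <= u' <= 1 -> 0 <= v' <= 1 -> u <= u' -> v <= v' ->
        (u - C u v) * (u' - C u' v') <= (u' - C u' v) * (u - C u v')).
Proof.
rewrite case3'; split => h u v u' v' hu hv hu' hv' uu vv.
  have vv' : 1 - v' <= 1 - v by lra.
  have := h u (1 - v') u' (1 - v) hu (r1 _ hv') hu' (r1 _ hv) uu vv'.
  by rewrite /H3 !e1 [X in _ <= X]mulrC.
have vv' : 1 - v' <= 1 - v by lra.
have := h u (1 - v') u' (1 - v) hu (r1 _ hv') hu' (r1 _ hv) uu vv'.
by rewrite /H3 [X in _ <= X]mulrC.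
Qed.

End Main.

Theorem theorem3p1 (d : measure_display) (T : measurableType d) (R : realType)
  (P : probability T R) (U V : T -> R) (C : R -> R -> R)
  (mU : measurable_fun setT U) (mV : measurable_fun setT V)
  (unifU : forall u : R, 0 <= u <= 1 -> P [set t | U t <= u] = u%:E)
  (unifV : forall v : R, 0 <= v <= 1 -> P [set t | V t <= v] = v%:E)
  (dfC : forall u v : R, 0 <= u <= 1 -> 0 <= v <= 1 ->
         P [set t | U t <= u /\ V t <= v] = (C u v)%:E) :
  (increasing_dir P U V (-1) (-1) <->
     (forall u v u' v' : R, 0 <= u <= 1 -> 0 <= v <= 1 ->
        0 <= u' <= 1 -> 0 <= v' <= 1 -> u <= u' -> v <= v' ->
        C u v' * C u' v <= C u v * C u' v'))
  /\
  (increasing_dir P U V 1 (-1) <->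
     (forall u v u' v' : R, 0 <= u <= 1 -> 0 <= v <= 1 ->
        0 <= u' <= 1 -> 0 <= v' <= 1 -> u <= u' -> v <= v' ->
        (v - C u v) * (v' - C u' v') <= (v - C u' v) * (v' - C u v')))
  /\
  (increasing_dir P U V (-1) 1 <->
     (forall u v u' v' : R, 0 <= u <= 1 -> 0 <= v <= 1 ->
        0 <= u' <= 1 -> 0 <= v' <= 1 -> u <= u' -> v <= v' ->
        (u - C u v) * (u' - C u' v') <= (u' - C u' v) * (u - C u v')))
  /\
  (increasing_dir P U V 1 1 <->
     (forall u v u' v' : R, 0 <= u <= 1 -> 0 <= v <= 1 ->
        0 <= u' <= 1 -> 0 <= v' <= 1 -> u <= u' -> v <= v' ->
        survival_copula C u v' * survival_copula C u' v
          <= survival_copula C u v * survival_copula C u' v')).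
Proof.
split; first exact: (case1 P U V C mU mV unifU unifV dfC).
split; first exact: (case2 P U V C mU mV unifU unifV dfC).
split; first exact: (case3 P U V C mU mV unifU unifV dfC).
exact: (case4 P U V C mU mV unifU unifV dfC).
Qed.
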